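(* Let $\mathbf x^{(1)},\dots,\mathbf x^{(M)}\in\mathbb R^s$ be pairwise distinct covering templates. Consider ReLU activation with max pooling ($\sigma(z)=\max\{0,z\}$, $P=\max$). Then the shallow ConvNet is universal: for every output index $y$ and every tensor $\mathcal A\in\mathbb R^{M\times\cdots\times M}$ of order $N$, there exist a number of hidden channels $Z$, representation functions $f_{\theta_1},\dots,f_{\theta_M}\in\mathcal F$ and weights $\{\mathbf a^{z,i}\}$, $\mathbf a^y$ such that the grid tensor satisfies $\mathcal A(h^S_y)=\mathcal A$. The same holds for the deep ConvNet (for suitable channel numbers $r_0,\dots,r_{L-1}$, representation functions in $\mathcal F$ and weights), i.e. the deep ConvNet with ReLU activation and max pooling is universal as well.
   Context: Inputs are $X=(\mathbf x_1,\dots,\mathbf x_N)\in(\mathbb R^s)^N$ ($N$ ''patches''). Representation functions are taken from a parametric family $\mathcal F=\{f_\theta:\mathbb R^s\to\mathbb R:\theta\in\Theta\}$ assumed throughout to satisfy: (continuity) $f_\theta(\mathbf x)$ is continuous with respect to both $\theta$ and $\mathbf x$; (non-degeneracy) for any pairwise distinct $\mathbf x^{(1)},\dots,\mathbf x^{(M)}\in\mathbb R^s$ there exist $f_{\theta_1},\dots,f_{\theta_M}\in\mathcal F$ such that the matrix $F\in\mathbb R^{M\times M}$ with $F_{i,d}=f_{\theta_d}(\mathbf x^{(i)})$ is non-singular. Shallow ConvNet with activation $\sigma$, pooling $P$ and $Z$ hidden channels: given $f_{\theta_1},\dots,f_{\theta_M}\in\mathcal F$, weights $\mathbf a^{z,i}\in\mathbb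 R^M$ ($z\in[Z]$, $i\in[N]$) and output weights $\mathbf a^y\in\mathbb R^Z$, its $y$-th score function is $h^S_y(X)=\sum_{z=1}^Z a^y_z\, P_{i\in[N]}\Big(\sigma\big(\sum_{d=1}^M a^{z,i}_d f_{\theta_d}(\mathbf x_i)\big)\Big)$, where $P$ is applied to the $N$ values indexed by $i$. Deep ConvNet ($N=2^L$, $L\ge1$) with channel numbers $r_0,\dots,r_{L-1}$: given $f_{\theta_1},\dots,f_{\theta_M}\in\mathcal F$, weights $\mathbf a^{0,j,\gamma}\in\mathbb R^M$ ($j\in[N],\gamma\in[r_0]$), $\mathbf a^{l,j,\gamma}\in\mathbb R^{r_{l-1}}$ ($l\in[L-1]$, $j\in[N/2^l]$, $\gamma\in[r_l]$), and $\mathbf a^{L,1,y}\in\mathbb R^{r_{L-1}}$, set $u^0_{j,\gamma}=\sigma(\sum_{d}a^{0,j,\gamma}_d f_{\theta_d}(\mathbf x_j))$, and for $l=0,\dots,L-1$: $v^l_{j,\gamma}=P(u^l_{2j-1,\gamma},u^l_{2j,\gamma})$ for $j\in[N/2^{l+1}]$, and (for $l\ge1$) $u^l_{j,\gamma}=\sigma(\sum_{\alpha=1}^{r_{l-1}}a^{l,j,\gamma}_\alpha v^{l-1}_{j,\alpha})$ for $j\in[N/2^l]$, $\gamma\in[r_l]$. The score function is $h^D_y(X)=\sum_{\alpha=1}^{r_{L-1}}a^{L,1,y}_\alpha v^{L-1}_{1,\alpha}$. Templates and grid tensors: for templates $\mathbf x^{(1)},\dots,\mathbf x^{(M)}\in\mathbb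 R^s$, the grid tensor of a function $h:(\mathbb R^s)^N\to\mathbb R$ is the order-$N$ tensor $\mathcal A(h)\in\mathbb R^{M\times\cdots\times M}$ with $\mathcal A(h)_{d_1,\dots,d_N}=h(\mathbf x^{(d_1)},\dots,\mathbf x^{(d_N)})$. Templates are called covering if score functions are identified whenever their grid tensors with respect to these templates coincide (values outside the grid are irrelevant for classification); a network is universal if (w.r.t. covering templates) every tensor is the grid tensor of some score function it realizes. *)

(* Defs.v *)
From HB Require Import structures.
From mathcomp Require Import all_boot all_order all_algebra.
From mathcomp Require Import all_classical all_reals topology normedtype.
Set Implicit Arguments. Unset Strict Implicit. Unset Printing Implicit Defensive.
Import Order.TTheory GRing.Theory Num.Theory.
Import numFieldNormedType.Exports.
Local Open Scope ring_scope.

Section Defs.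
Variable R : realType.

Definition relu (z : R) : R := Num.max 0 z.

(* max pooling over the N values v 0, ..., v (N-1) (N >= 1 in use) *)
Definition maxpool (N : nat) (v : 'I_N -> R) : R :=
  let s := [seq v i | i <- enum 'I_N] in foldr Num.max (head 0 s) s.

Definition fam_continuous (Theta : topologicalType) (s : nat)
  (f : Theta -> 'rV[R]_s -> R) : Prop :=
  continuous (fun p : Theta * 'rV[R]_s => f p.1 p.2).

Definition fam_nondegenerate (Theta : Type) (s : nat)
  (f : Theta -> 'rV[R]_s -> R) : Prop :=
  forall (M : nat) (x : 'I_M -> 'rV[R]_s), injective x ->
    exists th : 'I_M -> Theta,
      (\matrix_(i < M, d < M) f (th d) (x i)) \in unitmx.

Definition shallow_score (Theta : Type) (s M N Z : nat)
  (f : Theta -> 'rV[R]_s -> R) (th : 'I_M -> Theta)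
  (a : 'I_Z -> 'I_N -> 'I_M -> R) (ay : 'I_Z -> R)
  (X : 'I_N -> 'rV[R]_s) : R :=
  \sum_(z < Z) ay z *
     maxpool (fun i : 'I_N => relu (\sum_(d < M) a z i d * f (th d) (X i))).

(* Deep ConvNet (0-based indices: the paper's patch j, pair (2j-1,2j)
   become j, pair (2j, 2j+1)).  r l = r_l channel numbers;
   a0 j g d = a^{0,j,g}_d ; al l j g al' = a^{l,j,g}_{al'} (l >= 1) ;
   aL al' = a^{L,1,y}_{al'}.  Patches are indexed by nat; X j = x_{j+1}. *)
Section Deep.
Variables (Theta : Type) (s M : nat) (f : Theta -> 'rV[R]_s -> R)
  (th : 'I_M -> Theta) (r : nat -> nat)
  (a0 : nat -> nat -> nat -> R) (al : nat -> nat -> nat -> nat -> R)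
  (X : nat -> 'rV[R]_s).

Fixpoint deep_u (l j g : nat) : R :=
  match l with
  | 0 => relu (\sum_(d < M) a0 j g d * f (th d) (X j))
  | l'.+1 => relu (\sum_(b < r l')
       al l j g b * Num.max (deep_u l' (2 * j) b) (deep_u l' (2 * j + 1) b))
  end.

Definition deep_v (l j g : nat) : R :=
  Num.max (deep_u l (2 * j) g) (deep_u l (2 * j + 1) g).

Definition deep_score_nat (L : nat) (aL : nat -> R) : R :=
  \sum_(b < r L.-1) aL b * deep_v L.-1 0 b.
End Deep.

Definition deep_score (Theta : Type) (s M L : nat) (f : Theta -> 'rV[R]_s -> R)
  (th : 'I_M -> Theta) (r : nat -> nat)
  (a0 : nat -> nat -> nat -> R) (al : nat -> nat -> nat -> nat -> R)
  (aL : nat -> R) (X : 'I_(2 ^ L) -> 'rV[R]_s) : R :=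
  deep_score_nat f th r a0 al
    (fun j => if insub j is Some k then X k else 0) L aL.

End Defs.

(* Main.v *)
Require Import Defs.
From HB Require Import structures.
From mathcomp Require Import all_boot all_order all_algebra.
From mathcomp Require Import all_classical all_reals topology normedtype.
From mathcomp Require Import zify.
Import Order.TTheory GRing.Theory Num.Theory.
Import numFieldNormedType.Exports.
Set Implicit Arguments. Unset Strict Implicit.
Local Open Scope ring_scope.

Definition coef (R : realType) M (F : 'M[R]_M) (g : 'I_M -> R) (d : 'I_M) : R :=
  \sum_(j < M) invmx F d j * g j.

Lemma coefP (R : realType) M (F : 'M[R]_M) (g : 'I_M -> R) k :
  F \in unitmx -> \sum_(d < M) coef F g d * F k d = g k.
Proof.
move=> HF.
have E j : \sum_(d < M) F k d * invmx F d j = (k == j)%:R.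
  by have := mulmxV HF; move/matrixP/(_ k j); rewrite !mxE.
rewrite /coef.
under eq_bigr => d _ do rewrite big_distrl /=.
rewrite exchange_big /=.
under eq_bigr => j _.
  rewrite (eq_bigr (fun d => F k d * invmx F d j * g j)); last first.
    by move=> d _; rewrite mulrC mulrA.
  rewrite -big_distrl /= E.
  over.
rewrite (bigD1 k) //= eqxx mul1r big1 ?addr0 //.
by move=> j /negbTE; rewrite eq_sym => ->; rewrite mul0r.
Qed.

Lemma leMax (R : realType) (z x y : R) : (z <= Num.max x y) = (z <= x) || (z <= y).
Proof. exact: le_max. Qed.
Lemma maxR (R : realType) (x y : R) : x <= y -> Num.max x y = y.
Proof. exact: max_r. Qed.
Lemma maxL (R : realType) (x y : R) : y <= x -> Num.max x y = x.
Proof. exact: max_l. Qed.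

Lemma relu_ge0 (R : realType) (x : R) : 0 <= relu x.
Proof. have := @le_max _ R 0 0 x; rewrite lexx /=; exact. Qed.

Lemma relu_id (R : realType) (x : R) : 0 <= x -> relu x = x.
Proof. by move=> h; rewrite /relu; apply: max_r. Qed.

Lemma relu_nat (R : realType) (b : bool) : relu (b%:R : R) = b%:R.
Proof. by rewrite relu_id // ler0n. Qed.

Lemma foldr_max_ge (R : realType) (s : seq R) h y : y \in s -> y <= foldr Num.max h s.
Proof.
elim: s => [//|x s IH]; rewrite inE => /orP [/eqP ->|ys] /=; rewrite leMax.
  by rewrite lexx.
by rewrite IH // orbT.
Qed.

Lemma foldr_max_mem (R : realType) (s : seq R) h : foldr Num.max h s \in h :: s.
Proof.
elim: s => [|x s IH] /=; first by rewrite inE eqxx.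
case: (leP x (foldr Num.max h s)) => H.
  by move: IH; rewrite !inE => /orP [->//|->]; rewrite !orbT.
by rewrite !inE eqxx orbT.
Qed.

Lemma maxpool_ge (R : realType) N (v : 'I_N -> R) i : v i <= maxpool v.
Proof. by rewrite /maxpool; apply: foldr_max_ge; apply: map_f; rewrite mem_enum. Qed.

Lemma maxpool_att (R : realType) N (v : 'I_N -> R) : (0 < N)%N -> exists i, maxpool v = v i.
Proof.
move=> HN; rewrite /maxpool.
set s := [seq v i | i <- enum 'I_N].
have Hs : s != [::].
  by rewrite /s -size_eq0 size_map size_enum_ord -lt0n.
have : foldr Num.max (head 0 s) s \in s.
  have := foldr_max_mem s (head 0 s); rewrite inE => /orP [/eqP ->|//].
  by case: s Hs => //= x s' _; rewrite mem_head.
by case/mapP => i _ ->; exists i.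
Qed.

Lemma val01 (R : realType) N (w : 'I_N -> R) (V : R) (P : pred 'I_N) :
  (forall i, w i <= V) -> (exists i, V = w i) -> (forall i, w i = (P i)%:R) ->
  V = [exists i, P i]%:R.
Proof.
move=> Hge [j Vj] Hw; subst V.
case: existsP => [[i Pi]|nP].
  apply/le_anti; apply/andP; split; first by rewrite Hw; case: (P j).
  by apply: le_trans (Hge i); rewrite Hw Pi.
rewrite Hw; case Pj: (P j) => //; exfalso; apply: nP; by exists j.
Qed.

Lemma tree_ge (R : realType) (U : nat -> nat -> R) :
  (forall l j, U l.+1 j = Num.max (U l (2*j)%N) (U l (2*j+1)%N)) ->
  forall l j k, (k < 2^l)%N -> U 0%N (j * 2^l + k)%N <= U l j.
Proof.
move=> HU; elim=> [|l IH] j k Hk.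
  by move: Hk; rewrite expn0 ltnS leqn0 => /eqP ->; rewrite muln1 addn0.
rewrite HU leMax; move: Hk; rewrite expnS; set p := (2 ^ l)%N.
case: (ltnP k p) => Hkp Hk.
  have -> : (j * (2 * p) + k = (2 * j) * p + k)%N by lia.
  by rewrite IH.
have -> : (j * (2 * p) + k = (2 * j + 1) * p + (k - p))%N by lia.
by rewrite IH ?orbT //; lia.
Qed.

Lemma tree_att (R : realType) (U : nat -> nat -> R) :
  (forall l j, U l.+1 j = Num.max (U l (2*j)%N) (U l (2*j+1)%N)) ->
  forall l j, exists2 k, (k < 2^l)%N & U l j = U 0%N (j * 2^l + k)%N.
Proof.
move=> HU; elim=> [|l IH] j.
  by exists 0%N => //; rewrite expn0 muln1 addn0.
rewrite HU expnS; set p := (2 ^ l)%N.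
have [k1 Hk1 E1] := IH (2 * j)%N; have [k2 Hk2 E2] := IH (2 * j + 1)%N.
case: (leP (U l (2*j)%N) (U l (2*j+1)%N)) => H.
  rewrite E2; exists (p + k2)%N; first by lia.
  by congr U; rewrite /p; lia.
rewrite E1; exists k1; first by lia.
by congr U; rewrite /p; lia.
Qed.
Definition pb N M (z : 'I_#|{: {ffun 'I_N -> 'I_M}}|.+1) (i : 'I_N) (k : 'I_M) : bool :=
  if unlift ord0 z is Some q then k != (enum_val q : {ffun 'I_N -> 'I_M}) i else true.

Definition ayA (R : realType) N M (A : ('I_N -> 'I_M) -> R)
  (z : 'I_#|{: {ffun 'I_N -> 'I_M}}|.+1) : R :=
  if unlift ord0 z is Some q then - A (enum_val q : {ffun 'I_N -> 'I_M})
  else \sum_(e : {ffun 'I_N -> 'I_M}) A e.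

Lemma score_sum (R : realType) N M (A : ('I_N -> 'I_M) -> R) (d : 'I_N -> 'I_M) :
  (0 < N)%N ->
  \sum_(z < #|{: {ffun 'I_N -> 'I_M}}|.+1) ayA A z * [exists i, pb z i (d i)]%:R = A d.
Proof.
move=> HN.
rewrite big_ord_recl /ayA /pb unlift_none.
have -> : [exists i : 'I_N, true] = true by apply/existsP; exists (Ordinal HN).
rewrite [X in _ + X](eq_bigr (fun q => - A (enum_val q : {ffun 'I_N -> 'I_M}) *
   [exists i, d i != (enum_val q : {ffun 'I_N -> 'I_M}) i]%:R)); last by move=> q _; rewrite liftK.
rewrite -(big_enum_val (fun e : {ffun 'I_N -> 'I_M} =>
            - A e * [exists i, d i != e i]%:R)) /=.
set fd := [ffun i => d i] : {ffun 'I_N -> 'I_M}.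
have Efd : A fd = A d by congr A; apply: funext => i; rewrite ffunE.
rewrite [X in _ + X](_ : _ = \sum_(e : {ffun 'I_N -> 'I_M}) - A e * (e != fd)%:R); last first.
  apply: eq_big => // e _; congr (_ * _%:R); congr nat_of_bool.
  apply/idP/idP => [/existsP [i /eqP Hi]|].
    by apply/eqP => E; apply: Hi; rewrite E /fd ffunE.
  apply: contraNT => /existsPn Hall; apply/eqP/ffunP => i.
  by rewrite /fd ffunE; have := Hall i; rewrite negbK => /eqP.
rewrite mulr1 (bigD1 fd) //= [X in _ + X](bigD1 fd) //= eqxx mulr0 add0r.
rewrite [X in _ + X](eq_bigr (fun e : {ffun 'I_N -> 'I_M} => - A e)); last by move=> e He; rewrite He mulr1.
by rewrite sumrN addrK Efd.
Qed.

Lemma coefP' (R : realType) (Theta : Type) s (f : Theta -> 'rV[R]_s -> R) M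
  (xt : 'I_M -> 'rV[R]_s) (th : 'I_M -> Theta) (g : 'I_M -> R) k :
  (\matrix_(i < M, d < M) f (th d) (xt i)) \in unitmx ->
  \sum_(d < M) coef (\matrix_(i < M, d < M) f (th d) (xt i)) g d * f (th d) (xt k) = g k.
Proof.
move=> HF; rewrite -(coefP g k HF); apply: eq_bigr => d _; by rewrite mxE.
Qed.

Lemma deep_u_ge0 (R : realType) (Theta : Type) s M (f : Theta -> 'rV[R]_s -> R) (th : 'I_M -> Theta) r a0 al X l j g :
  0 <= deep_u f th r a0 al X l j g.
Proof. by case: l => [|l] /=; apply: relu_ge0. Qed.

Lemma deep_step (R : realType) (Theta : Type) s M (f : Theta -> 'rV[R]_s -> R)
  (th : 'I_M -> Theta) Z a0 X l j g : (g < Z)%N ->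
  deep_u f th (fun _ => Z) a0 (fun _ _ g b => ((b == g)%:R : R)) X l.+1 j g =
  Num.max (deep_u f th (fun _ => Z) a0 (fun _ _ g b => ((b == g)%:R : R)) X l (2*j) g)
          (deep_u f th (fun _ => Z) a0 (fun _ _ g b => ((b == g)%:R : R)) X l (2*j+1) g).
Proof.
move=> Hg /=.
rewrite (bigD1 (Ordinal Hg)) //= eqxx mul1r big1 ?addr0.
  by apply: relu_id; rewrite leMax deep_u_ge0.
move=> b Hb; suff -> : (b == g :> nat) = false by rewrite mul0r.
by apply/negbTE; apply: contra Hb => /eqP E; apply/eqP/val_inj.
Qed.

Lemma insub_ordK n (i : 'I_n) : insub (nat_of_ord i) = Some i.
Proof. exact: valK. Qed.

Theorem claim4 (R : realType) (Theta : topologicalType) (s : nat)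
  (f : Theta -> 'rV[R]_s -> R)
  (Hcont : fam_continuous f) (Hnd : fam_nondegenerate f)
  (M : nat) (xt : 'I_M -> 'rV[R]_s) (Hdist : injective xt) :
  (forall (N : nat), (0 < N)%N ->
     forall A : ('I_N -> 'I_M) -> R,
     exists (Z : nat) (th : 'I_M -> Theta)
            (a : 'I_Z -> 'I_N -> 'I_M -> R) (ay : 'I_Z -> R),
       forall d : 'I_N -> 'I_M,
         shallow_score f th a ay (fun i => xt (d i)) = A d)
  /\
  (forall (L : nat), (0 < L)%N ->
     forall A : ('I_(2 ^ L) -> 'I_M) -> R,
     exists (r : nat -> nat) (th : 'I_M -> Theta)
            (a0 : nat -> nat -> nat -> R) (al : nat -> nat -> nat -> nat -> R)
            (aL : nat -> R),
       forall d : 'I_(2 ^ L) -> 'I_M,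
         deep_score f th r a0 al aL (fun i => xt (d i)) = A d).
Proof.
have [th HF] := Hnd M xt Hdist.
set F := \matrix_(i < M, d < M) f (th d) (xt i).
split.
  move=> N HN A.
  exists #|{: {ffun 'I_N -> 'I_M}}|.+1, th,
    (fun z i => coef F (fun k => (pb z i k)%:R)), (ayA A) => d.
  rewrite /shallow_score -[RHS](score_sum A d HN); apply: eq_bigr => z _.
  congr (_ * _).
  apply: (val01 (w := fun i => relu (\sum_(d0 < M)
            coef F (fun k => (pb z i k)%:R) d0 * f (th d0) (xt (d i))))).
  - by move=> i; apply: maxpool_ge.
  - exact: maxpool_att.
  - by move=> i /=; rewrite coefP' // relu_nat.
move=> [//|L] _ A.
set N := (2 ^ L.+1)%N.
have HN : (0 < N)%N by rewrite expn_gt0.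
set Z := #|{: {ffun 'I_N -> 'I_M}}|.+1.
pose a0 := fun (j g dn : nat) =>
  match (insub g : option 'I_Z), (insub j : option 'I_N), (insub dn : option 'I_M) with
  | Some z, Some i, Some dd => coef F (fun k => (pb z i k)%:R) dd
  | _, _, _ => 0 end.
pose al := fun (_ _ g b : nat) => ((b == g)%:R : R).
pose aL := fun b => if (insub b : option 'I_Z) is Some z then ayA A z else 0.
exists (fun _ => Z), th, a0, al, aL => d.
rewrite /deep_score /deep_score_nat -[RHS](score_sum A d HN).
rewrite /=; apply: eq_bigr => b _.
rewrite /aL insub_ordK; congr (_ * _).
have Hb : (b < Z)%N := ltn_ord b.
pose U := fun l j => deep_u f th (fun _ => Z) a0 al
  (fun j => if insub j is Some k then xt (d k) else 0) l j b.
have Hstep : forall l j, U l.+1 j = Num.max (U l (2*j)%N) (U l (2*j+1)%N).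
  by move=> l j; rewrite /U deep_step.
rewrite /deep_v.
change (Num.max (U L (2*0)%N) (U L (2*0+1)%N) = [exists i, pb b i (d i)]%:R).
rewrite muln0 add0n.
have EN : N = (2 * 2 ^ L)%N by rewrite /N expnS.
apply: (val01 (w := fun i : 'I_N => U 0%N i)).
- move=> i /=; case: (ltnP i (2 ^ L)) => Hi.
    have := tree_ge Hstep 0 Hi; rewrite mul0n add0n => H.
    by apply: le_trans H _; rewrite leMax lexx.
  have Hk : (i - 2 ^ L < 2 ^ L)%N.
    have := ltn_ord i; rewrite {2}EN; lia.
  have := tree_ge Hstep 1 Hk; rewrite mul1n subnKC // => H.
  by apply: le_trans H _; rewrite leMax lexx orbT.
- have [k1 Hk1 E1] := tree_att Hstep L 0; have [k2 Hk2 E2] := tree_att Hstep L 1.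
  case: leP => _.
    have Hk : (1 * 2 ^ L + k2 < N)%N by rewrite EN; lia.
    by exists (Ordinal Hk).
  have Hk : (0 * 2 ^ L + k1 < N)%N by rewrite EN; lia.
  by exists (Ordinal Hk).
- move=> i /=; rewrite /U /= /a0.
  under eq_bigr => d0 _ do rewrite !insub_ordK.
  by rewrite coefP' // relu_nat.
Qed.
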